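(* Let $\mathcal T$ be an atomic orbital category. The restricted map $\nabla_u:\mathrm{wIndSys}^{uni}_{\mathcal T}\to\mathrm{Fam}_{\mathcal T}$ has a fully faithful left adjoint given by $\mathcal F\mapsto\underline{\mathbb F}^0_{\mathcal T}\cup E^{\mathcal T}_{\mathcal F}\underline{\mathbb F}^\infty_{\mathcal F}$ and a fully faithful right adjoint; hence it is a cocartesian fibration, with cocartesian transport along $\mathcal F\le\mathcal F'$ given by $\mathcal C\mapsto\mathcal C\vee E^{\mathcal T}_{\mathcal F'}\underline{\mathbb F}^\infty_{\mathcal F'}$.
   Context: For a small category $\mathcal T$, $\mathbb F_{\mathcal T}$ is the full subcategory of $\mathrm{Fun}(\mathcal T^{op},\mathrm{Set})$ on finite coproducts of representables; $\mathcal T$ is orbital if $\mathbb F_{\mathcal T}$ has pullbacks, and atomic if every morphism of $\mathcal T$ admitting a section is an isomorphism. $\mathbb F_V:=\mathbb F_{\mathcal T,/V}$, $*_V$ terminal, $\emptyset_V$ initial, $n\cdot S$ the $n$-fold coproduct; for $U\to V$, $\mathrm{Res}^V_U$ is pullback and $\mathrm{Ind}^V_U$ postcomposition. A full $\mathcal T$-subcategory assigns isomorphism-closed classes $\mathcal C_V\subseteq\mathrm{Ob}\,\mathbb F_V$ stable under restriction. For $S\in\mathbb F_V$ with orbits $U$ and $T_U\in\mathbb F_U$, $\coprod_U^ST_U:=\coprod_U\mathrm{Ind}_U^VT_U$. A $\mathcal T$-weak indexing system is a full $\mathcal T$-subcategory with $\mathcal C_V\neq\emptyset\Rightarrow *_V\in\mathcal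 C_V$ and closed under $\coprod^S_UT_U$ for $S\in\mathcal C_V$, $T_U\in\mathcal C_U$; these form a lattice under inclusion (join $\vee$). It is unital if every $\mathcal C_V$ is nonempty and $S\sqcup S'\in\mathcal C_V\Rightarrow S,S'\in\mathcal C_V$; $\mathrm{wIndSys}^{uni}_{\mathcal T}$ is the poset of these. A $\mathcal T$-family is a full subcategory $\mathcal F$ with $V\to W$, $W\in\mathcal F\Rightarrow V\in\mathcal F$; $\mathrm{Fam}_{\mathcal T}$ their poset. $\nabla_u(\mathcal C)=\{V\mid 2\cdot *_V\in\mathcal C_V\}$. $\underline{\mathbb F}^0_{\mathcal T}$ has $V$-values $\{\emptyset_V,*_V\}$; $E^{\mathcal T}_{\mathcal F}\underline{\mathbb F}^\infty_{\mathcal F}$ has $V$-values $\{n\cdot *_V\mid n\in\mathbb N\}$ for $V\in\mathcal F$ and $\emptyset$ otherwise. Adjoints of monotone maps: $L\dashv\pi$ iff $L(x)\le y\iff x\le\pi(y)$; fully faithful means order-reflecting. A monotone $\pi:P\to Q$ is a cocartesian fibration if for all $q\le q'$ and $x\in\pi^{-1}(q)$ there is $t_q^{q'}x\in\pi^{-1}(q')$ with: for all $y$ with $q'\le\pi(y)$, $x\le y\iff t_q^{q'}x\le y$ ($t_q^{q'}$ is cocartesian transport). *)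

(* Defs.v *)
From mathcomp Require Import all_boot.
Unset Implicit Arguments.
Unset Strict Implicit.
Unset Printing Implicit Defensive.

Record Cat := {
  Ob : Type;
  Hom : Ob -> Ob -> Type;
  cid : forall a, Hom a a;
  ccomp : forall {a b c}, Hom b c -> Hom a b -> Hom a c;
  ccomp_id_l : forall a b (f : Hom a b), ccomp (cid b) f = f;
  ccomp_id_r : forall a b (f : Hom a b), ccomp f (cid a) = f;
  ccomp_assoc : forall a b c d (h : Hom c d) (g : Hom b c) (f : Hom a b),
      ccomp h (ccomp g f) = ccomp (ccomp h g) f }.
Arguments Hom {_} _ _.
Arguments cid {_} _.
Arguments ccomp {_ _ _ _} _ _.

Section FT.
Variable T : Cat.

(* ---------- the category F_T of finite coproducts of representables ----------
   An object is a finite coproduct  \coprod_{i in I} y(a_i)  (I a finite type);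
   by the Yoneda lemma a map  \coprod_i y(a_i) -> \coprod_j y(b_j)  is, for each
   i, a choice of j together with a morphism a_i -> b_j in T. *)
Record FObj := { fidx : finType; fob : fidx -> Ob T }.
Arguments fob : clear implicits.
Definition FHom (A B : FObj) :=
  forall i : fidx A, {j : fidx B & Hom (fob A i) (fob B j)}.
Definition fid (A : FObj) : FHom A A := fun i => existT _ i (cid (fob A i)).
Arguments fid : clear implicits.
Definition fcomp {A B C : FObj} (g : FHom B C) (f : FHom A B) : FHom A C :=
  fun i => let: existT j h := f i in
           let: existT k h' := g j in existT _ k (ccomp h' h).

Definition is_pullback {A B C : FObj} (f : FHom A C) (g : FHom B C)
  {P : FObj} (p1 : FHom P A) (p2 : FHom P B) : Prop :=
  fcomp f p1 = fcomp g p2 /\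
  forall (Q : FObj) (q1 : FHom Q A) (q2 : FHom Q B), fcomp f q1 = fcomp g q2 ->
    exists! u : FHom Q P, fcomp p1 u = q1 /\ fcomp p2 u = q2.

Definition rep (V : Ob T) : FObj := {| fidx := unit; fob := fun _ => V |}.
Definition repmap {U V : Ob T} (f : Hom U V) : FHom (rep U) (rep V) :=
  fun _ => existT _ tt f.

Record FV (V : Ob T) := { fvobj : FObj; fvmap : FHom fvobj (rep V) }.
Arguments fvobj {V} _.
Arguments fvmap {V} _ _.

Definition fv_iso {V : Ob T} (S S' : FV V) : Prop :=
  exists (phi : FHom (fvobj S) (fvobj S')) (psi : FHom (fvobj S') (fvobj S)),
    [/\ fcomp psi phi = fid (fvobj S), fcomp phi psi = fid (fvobj S')
      & fcomp (fvmap S') phi = fvmap S].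

Definition starV (V : Ob T) : FV V := {| fvobj := rep V; fvmap := fid (rep V) |}.
Definition nstarObj (n : nat) (V : Ob T) : FObj :=
  {| fidx := 'I_n; fob := fun _ => V |}.
Definition nstarV (n : nat) (V : Ob T) : FV V :=
  {| fvobj := nstarObj n V;
     fvmap := (fun _ => existT _ tt (cid V)) : FHom (nstarObj n V) (rep V) |}.
Definition emptyObj (V : Ob T) : FObj := {| fidx := void; fob := fun _ => V |}.
Definition emptyV (V : Ob T) : FV V :=
  {| fvobj := emptyObj V;
     fvmap := (fun x => match x with end) : FHom (emptyObj V) (rep V) |}.

Definition indV {U V : Ob T} (f : Hom U V) (S : FV U) : FV V :=
  {| fvobj := fvobj S; fvmap := fcomp (repmap f) (fvmap S) |}.

Definition orb {V : Ob T} (S : FV V) (i : fidx (fvobj S)) : Ob T := fob (fvobj S) i.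
Definition orbmap {V : Ob T} (S : FV V) (i : fidx (fvobj S)) : Hom (orb S i) V :=
  projT2 (fvmap S i).

(* \coprod^S_U T_U := \coprod_U Ind_U^V T_U *)
Definition coprodObj {V : Ob T} {S : FV V} (T_ : forall i, FV (orb S i)) : FObj :=
  {| fidx := {i : fidx (fvobj S) & fidx (fvobj (T_ i))};
     fob := fun x => fob (fvobj (T_ (tag x))) (tagged x) |}.
Definition coprodV {V : Ob T} {S : FV V} (T_ : forall i, FV (orb S i)) : FV V :=
  {| fvobj := coprodObj T_;
     fvmap := (fun x => fvmap (indV (orbmap S (tag x)) (T_ (tag x))) (tagged x))
               : FHom (coprodObj T_) (rep V) |}.

Definition sumObj (A B : FObj) : FObj :=
  {| fidx := (fidx A + fidx B)%type;
     fob := fun x => match x with inl i => fob A i | inr j => fob B j end |}.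
Definition sumV {V : Ob T} (S S' : FV V) : FV V :=
  {| fvobj := sumObj (fvobj S) (fvobj S');
     fvmap := (fun x => match x as x0 return {j : unit & Hom (fob (sumObj _ _) x0) V} with
                        | inl i => fvmap S i | inr j => fvmap S' j end)
              : FHom (sumObj (fvobj S) (fvobj S')) (rep V) |}.

Definition Cls := forall V : Ob T, FV V -> Prop.

Definition cls_le (C D : Cls) : Prop := forall V (S : FV V), C V S -> D V S.

Definition full_Tsubcat (C : Cls) : Prop :=
  (forall V (S S' : FV V), fv_iso S S' -> C V S -> C V S') /\
  (* Res^V_U S (any pullback of S -> V along U -> V) lies in C_U *)
  (forall (U V : Ob T) (f : Hom U V) (S : FV V) (P : FObj)
          (q : FHom P (rep U)) (r : FHom P (fvobj S)),
      is_pullback (fvmap S) (repmap f) r q -> C V S -> C U {| fvobj := P; fvmap := q |}).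

Definition weak_indexing_system (C : Cls) : Prop :=
  [/\ full_Tsubcat C,
      (forall V, (exists S : FV V, C V S) -> C V (starV V))
    & (forall V (S : FV V) (T_ : forall i, FV (orb S i)),
         C V S -> (forall i, C (orb S i) (T_ i)) -> C V (coprodV T_))].

Definition unital_wis (C : Cls) : Prop :=
  [/\ weak_indexing_system C,
      (forall V, exists S : FV V, C V S)
    & (forall V (S S' : FV V), C V (sumV S S') -> C V S /\ C V S')].

Definition wis_join (C D : Cls) : Cls := fun V S =>
  forall W : Cls, weak_indexing_system W -> cls_le C W -> cls_le D W -> W V S.

Definition is_family (F : Ob T -> Prop) : Prop :=
  forall V W : Ob T, Hom V W -> F W -> F V.
Definition fam_le (F G : Ob T -> Prop) : Prop := forall V, F V -> G V.

Definition nabla_u (C : Cls) : Ob T -> Prop := fun V => C V (nstarV 2 V).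

(* F^0_T and E^T_F F^infty_F, as isomorphism-closed classes *)
Definition F0 : Cls := fun V S => fv_iso S (emptyV V) \/ fv_iso S (starV V).
Definition EFinf (F : Ob T -> Prop) : Cls :=
  fun V S => F V /\ exists n : nat, fv_iso S (nstarV n V).
Definition cls_union (C D : Cls) : Cls := fun V S => C V S \/ D V S.

End FT.

Arguments FHom {T} _ _.
Arguments fid {T} _.
Arguments fcomp {T A B C} _ _.
Arguments is_pullback {T A B C} _ _ {P} _ _.
Arguments cls_le {T} _ _.
Arguments full_Tsubcat {T} _.
Arguments weak_indexing_system {T} _.
Arguments unital_wis {T} _.
Arguments wis_join {T} _ _ _ _.
Arguments is_family {T} _.
Arguments fam_le {T} _ _.
Arguments nabla_u {T} _ _.
Arguments EFinf {T} _ _ _.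
Arguments cls_union {T} _ _ _ _.

Definition orbital (T : Cat) : Prop :=
  forall (A B C : FObj T) (f : FHom A C) (g : FHom B C),
    exists (P : FObj T) (p1 : FHom P A) (p2 : FHom P B), is_pullback f g p1 p2.

Definition atomic (T : Cat) : Prop :=
  forall (a b : Ob T) (f : Hom a b),
    (exists s : Hom b a, ccomp f s = cid b) ->
    exists g : Hom b a, ccomp g f = cid a /\ ccomp f g = cid b.

(* Main.v *)
Require Import Defs.
From mathcomp Require Import all_boot.
From Stdlib Require Import Eqdep ClassicalEpsilon FunctionalExtensionality Classical PropExtensionality.

Set Implicit Arguments.

Section Infra.
Variable T : Cat.

Lemma cassoc {a b c d : Ob T} (h : Hom c d) (g : Hom b c) (f : Hom a b) :
  ccomp h (ccomp g f) = ccomp (ccomp h g) f.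
Proof. apply: ccomp_assoc. Qed.
Lemma cidl {a b : Ob T} (f : Hom a b) : ccomp (cid b) f = f.
Proof. apply: ccomp_id_l. Qed.
Lemma cidr {a b : Ob T} (f : Hom a b) : ccomp f (cid a) = f.
Proof. apply: ccomp_id_r. Qed.

Lemma sig_eq {A : Type} {P : A -> Type} (a : A) (x y : P a) :
  existT P a x = existT P a y -> x = y.
Proof. apply inj_pair2. Qed.

Lemma fhom_ext {A B : FObj T} (f g : FHom A B) : (forall i, f i = g i) -> f = g.
Proof. intro H. apply functional_extensionality_dep. exact H. Qed.

Lemma rep_ext {X : Ob T} {B : FObj T} (f g : FHom (rep T X) B) : f tt = g tt -> f = g.
Proof. intro H. apply fhom_ext. by case. Qed.

Lemma fcomp_assoc {A B C D : FObj T} (h : FHom C D) (g : FHom B C) (f : FHom A B) :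
  fcomp h (fcomp g f) = fcomp (fcomp h g) f.
Proof.
apply fhom_ext => i. rewrite /fcomp. case: (f i) => j x. case: (g j) => k y.
case: (h k) => l z. by rewrite ccomp_assoc.
Qed.

Lemma fcomp_id_l {A B : FObj T} (f : FHom A B) : fcomp (fid B) f = f.
Proof. apply fhom_ext => i. rewrite /fcomp /fid. case: (f i) => j x. by rewrite ccomp_id_l. Qed.

Lemma fcomp_id_r {A B : FObj T} (f : FHom A B) : fcomp f (fid A) = f.
Proof. apply fhom_ext => i. rewrite /fcomp /fid. case: (f i) => j x. by rewrite ccomp_id_r. Qed.

Lemma repmap_comp {U V W : Ob T} (g : Hom V W) (f : Hom U V) :
  fcomp (repmap T g) (repmap T f) = repmap T (ccomp g f).
Proof. by apply fhom_ext; case. Qed.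

Lemma fvmapE {V : Ob T} (S : FV T V) i : fvmap T V S i = existT _ tt (orbmap T S i).
Proof. rewrite /orbmap. by case: (fvmap T V S i) => [[] h]. Qed.

Lemma fvmap_ext {V : Ob T} (A : FObj T) (f g : FHom A (rep T V)) :
  (forall i, projT2 (f i) = projT2 (g i)) -> f = g.
Proof.
move=> H; apply fhom_ext => i. move: (H i). case: (f i) => [[] x]; case: (g i) => [[] y].
by move=> /= ->.
Qed.

Definition isoT {a b : Ob T} (h : Hom a b) :=
  exists g : Hom b a, ccomp g h = cid a /\ ccomp h g = cid b.

Definition pbrep {A B C : FObj T} (f : FHom A C) (g : FHom B C) {P : FObj T}
  (p1 : FHom P A) (p2 : FHom P B) :=
  fcomp f p1 = fcomp g p2 /\
  forall X (x1 : FHom (rep T X) A) (x2 : FHom (rep T X) B), fcomp f x1 = fcomp g x2 ->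
    exists! u : FHom (rep T X) P, fcomp p1 u = x1 /\ fcomp p2 u = x2.

Lemma pb_pbrep {A B C : FObj T} (f : FHom A C) (g : FHom B C) {P : FObj T}
  (p1 : FHom P A) (p2 : FHom P B) : is_pullback f g p1 p2 -> pbrep f g p1 p2.
Proof. case=> H1 H2; split => // X; apply: H2. Qed.

Lemma pbrep_pb {A B C : FObj T} (f : FHom A C) (g : FHom B C) {P : FObj T}
  (p1 : FHom P A) (p2 : FHom P B) : pbrep f g p1 p2 -> is_pullback f g p1 p2.
Proof.
case=> Hc H; split => // Q q1 q2 Hq.
have Hk : forall k, fcomp f ((fun _ => q1 k) : FHom (rep T (fob T Q k)) A)
                  = fcomp g ((fun _ => q2 k) : FHom (rep T (fob T Q k)) B).
  move=> k; apply: rep_ext. exact: (f_equal (fun F => F k) Hq).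
pose u k := projT1 (constructive_indefinite_description _ (H _ _ _ (Hk k))).
have Hu k : (fcomp p1 (u k) = (fun _ => q1 k)) /\ (fcomp p2 (u k) = (fun _ => q2 k)) /\
   forall u' : FHom (rep T (fob T Q k)) P, fcomp p1 u' = (fun _ => q1 k) /\ fcomp p2 u' = (fun _ => q2 k) -> u k = u'.
  rewrite /u; case: (constructive_indefinite_description _ _) => x [[? ?] Hx] /=.
  by split; [|split].
exists (fun k => u k tt); split.
  split; apply: fhom_ext => k; case: (Hu k) => [E1 [E2 _]].
    exact: (f_equal (fun F => F tt) E1).
  exact: (f_equal (fun F => F tt) E2).
move=> u' [E1 E2]; apply: fhom_ext => k.
case: (Hu k) => [_ [_ Hun]].
have E : u k = (fun _ => u' k).
  apply: Hun; split; apply: rep_ext.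
    exact: (f_equal (fun F => F k) E1).
  exact: (f_equal (fun F => F k) E2).
by rewrite E.
Qed.

End Infra.
Arguments cassoc {T a b c d} h g f.
Arguments cidl {T a b} f.
Arguments cidr {T a b} f.
Arguments isoT {T a b} h.
Arguments pbrep {T A B C} f g {P} p1 p2.

Set Implicit Arguments.

Section IsoB.
Variable T : Cat.

Lemma iso_refl {V : Ob T} (S : FV T V) : fv_iso T S S.
Proof. exists (fid _), (fid _); split; by rewrite ?fcomp_id_l ?fcomp_id_r. Qed.

Lemma iso_sym {V : Ob T} (S S' : FV T V) : fv_iso T S S' -> fv_iso T S' S.
Proof.
case=> phi [psi [H1 H2 H3]]; exists psi, phi; split => //.
by rewrite -H3 -fcomp_assoc H2 fcomp_id_r.
Qed.

Lemma iso_trans {V : Ob T} (S1 S2 S3 : FV T V) :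
  fv_iso T S1 S2 -> fv_iso T S2 S3 -> fv_iso T S1 S3.
Proof.
case=> phi [psi [H1 H2 H3]]; case=> phi' [psi' [H1' H2' H3']].
exists (fcomp phi' phi), (fcomp psi psi'); split.
- by rewrite fcomp_assoc -(fcomp_assoc psi) H1' fcomp_id_r.
- by rewrite fcomp_assoc -(fcomp_assoc phi') H2 fcomp_id_r.
- by rewrite fcomp_assoc H3'.
Qed.

Lemma pb_unique {A B C : FObj T} (f : FHom A C) (g : FHom B C) {P P' : FObj T}
  (p1 : FHom P A) (p2 : FHom P B) (p1' : FHom P' A) (p2' : FHom P' B) :
  is_pullback f g p1 p2 -> is_pullback f g p1' p2' ->
  exists (u : FHom P P') (v : FHom P' P),
    [/\ fcomp v u = fid P, fcomp u v = fid P', fcomp p1' u = p1 & fcomp p2' u = p2].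
Proof.
move=> [Hc H] [Hc' H'].
case: (H' _ _ _ Hc) => u [[U1 U2] _].
case: (H _ _ _ Hc') => v [[V1 V2] _].
have self : forall (Q : FObj T) (q1 : FHom Q A) (q2 : FHom Q B)
  (K : forall (Q0 : FObj T) (q3 : FHom Q0 A) (q4 : FHom Q0 B), fcomp f q3 = fcomp g q4 ->
      exists! w : FHom Q0 Q, fcomp q1 w = q3 /\ fcomp q2 w = q4)
  (w : FHom Q Q), fcomp f q1 = fcomp g q2 -> fcomp q1 w = q1 -> fcomp q2 w = q2 -> w = fid Q.
  move=> Q q1 q2 K w E E1 E2.
  case: (K _ _ _ E) => w0 [_ Hw0].
  rewrite -(Hw0 w) //; apply: Hw0; by rewrite !fcomp_id_r.
exists u, v; split => //.
- apply: (self _ p1 p2 H) => //; by rewrite fcomp_assoc ?V1 ?V2 ?U1 ?U2.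
- apply: (self _ p1' p2' H') => //; by rewrite fcomp_assoc ?V1 ?V2 ?U1 ?U2.
Qed.

Arguments pb_unique {A B C f g P P' p1 p2 p1' p2'} _ _.

Lemma pb_unique_iso {V W : Ob T} (S : FV T V) (f : Hom W V) {P P' : FObj T}
  (r : FHom P (fvobj T V S)) (q : FHom P (rep T W))
  (r' : FHom P' (fvobj T V S)) (q' : FHom P' (rep T W)) :
  is_pullback (fvmap T V S) (repmap T f) r q -> is_pullback (fvmap T V S) (repmap T f) r' q' ->
  fv_iso T {| fvobj := P; fvmap := q |} {| fvobj := P'; fvmap := q' |}.
Proof.
move=> H1 H2; case: (pb_unique H1 H2) => u [v [E1 E2 E3 E4]].
by exists u, v; split.
Qed.

Lemma iso_fvmap_psi {V : Ob T} {S S' : FV T V} phi psi :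
  fcomp psi phi = fid _ -> fcomp phi psi = fid _ -> fcomp (fvmap T V S') phi = fvmap T V S ->
  fcomp (fvmap T V S) psi = fvmap T V S'.
Proof. move=> H1 H2 H3. by rewrite -H3 -fcomp_assoc H2 fcomp_id_r. Qed.

Lemma pb_along_iso {V W : Ob T} (S S' : FV T V) (f : Hom W V) {P : FObj T}
  (r : FHom P (fvobj T V S)) (q : FHom P (rep T W)) phi psi :
  fcomp psi phi = fid _ -> fcomp phi psi = fid _ -> fcomp (fvmap T V S') phi = fvmap T V S ->
  is_pullback (fvmap T V S) (repmap T f) r q ->
  is_pullback (fvmap T V S') (repmap T f) (fcomp phi r) q.
Proof.
move=> H1 H2 H3 [Hc H].
have H4 := iso_fvmap_psi H1 H2 H3.
split; first by rewrite fcomp_assoc H3.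
move=> Q q1 q2 Hq.
have Hq' : fcomp (fvmap T V S) (fcomp psi q1) = fcomp (repmap T f) q2.
  by rewrite fcomp_assoc H4.
case: (H _ _ _ Hq') => u [[U1 U2] Hu].
exists u; split.
  by rewrite -fcomp_assoc U1 fcomp_assoc H2 fcomp_id_l.
move=> u' [E1 E2]; apply: Hu; split => //.
by rewrite -E1 !fcomp_assoc H1 fcomp_id_l.
Qed.

End IsoB.

Set Implicit Arguments.

Definition bijOf {A B : finType} (E : #|A| = #|B|) (x : A) : B :=
  enum_val (cast_ord E (enum_rank x)).
Lemma bijOfK {A B : finType} (E : #|A| = #|B|) : cancel (bijOf E) (bijOf (esym E)).
Proof. move=> x; by rewrite /bijOf enum_valK cast_ordK enum_rankK. Qed.
Lemma bijOfK' {A B : finType} (E : #|A| = #|B|) : cancel (bijOf (esym E)) (bijOf E).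
Proof. move=> x; by rewrite /bijOf enum_valK cast_ordKV enum_rankK. Qed.

Section CC.
Variable T : Cat.

Definition invOf {a b : Ob T} {h : Hom a b} (H : isoT h) : Hom b a :=
  proj1_sig (constructive_indefinite_description _ H).
Lemma invOf_l {a b : Ob T} {h : Hom a b} (H : isoT h) : ccomp (invOf H) h = cid a.
Proof. rewrite /invOf; by case: (constructive_indefinite_description _ H) => g [? ?]. Qed.
Lemma invOf_r {a b : Ob T} {h : Hom a b} (H : isoT h) : ccomp h (invOf H) = cid b.
Proof. rewrite /invOf; by case: (constructive_indefinite_description _ H) => g [? ?]. Qed.

Lemma isoT_id (a : Ob T) : isoT (cid a).
Proof. exists (cid a); by rewrite cidl. Qed.

Lemma isoT_comp {a b c : Ob T} (g : Hom b c) (h : Hom a b) :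
  isoT g -> isoT h -> isoT (ccomp g h).
Proof.
case=> g' [G1 G2] [h' [H1 H2]]; exists (ccomp h' g'); split.
- by rewrite -cassoc (cassoc g') G1 cidl.
- by rewrite -cassoc (cassoc h) H2 cidl.
Qed.

Lemma isoT_cancel {a b c : Ob T} {e : Hom b c} {h1 h2 : Hom a b} :
  isoT e -> ccomp e h1 = ccomp e h2 -> h1 = h2.
Proof.
case=> g [G1 _] E. by rewrite -(cidl h1) -(cidl h2) -G1 -!cassoc E.
Qed.

Lemma isoT_inv_unique {a b : Ob T} {e : Hom a b} {h1 h2 : Hom b a} :
  isoT e -> ccomp e h1 = cid b -> ccomp e h2 = cid b -> h1 = h2.
Proof. move=> He E1 E2; apply: (isoT_cancel He); by rewrite E1 E2. Qed.

Definition allIso {V : Ob T} (S : FV T V) := forall i, isoT (orbmap T S i).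

Lemma allIso_bij {V : Ob T} (S S' : FV T V) (s : fidx T (fvobj T V S) -> fidx T (fvobj T V S'))
  (t : fidx T (fvobj T V S') -> fidx T (fvobj T V S)) :
  allIso S -> allIso S' -> cancel s t -> cancel t s -> fv_iso T S S'.
Proof.
move=> HS HS' st ts.
pose phi : FHom (fvobj T V S) (fvobj T V S') :=
  fun i => existT _ (s i) (ccomp (invOf (HS' (s i))) (orbmap T S i)).
pose psi : FHom (fvobj T V S') (fvobj T V S) :=
  fun j => existT _ (t j) (ccomp (invOf (HS (t j))) (orbmap T S' j)).
exists phi, psi; split.
- apply: fhom_ext => i; rewrite /fcomp /phi /psi /=.
  rewrite cassoc -(cassoc (invOf (HS (t (s i))))) invOf_r cidr.
  rewrite st. by rewrite invOf_l.
- apply: fhom_ext => i; rewrite /fcomp /phi /psi /=.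
  rewrite cassoc -(cassoc (invOf (HS' (s (t i))))) invOf_r cidr.
  rewrite ts. by rewrite invOf_l.
- apply: fvmap_ext => i; rewrite /fcomp /phi /= fvmapE /=.
  by rewrite cassoc invOf_r cidl.
Qed.

Lemma allIso_card {V : Ob T} (S S' : FV T V) :
  allIso S -> allIso S' -> #|fidx T (fvobj T V S)| = #|fidx T (fvobj T V S')| -> fv_iso T S S'.
Proof. move=> H1 H2 E; exact: (allIso_bij H1 H2 (bijOfK E) (bijOfK' E)). Qed.

Lemma fcomp_tag {A B C : FObj T} (g : FHom B C) (f : FHom A B) i :
  projT1 (fcomp g f i) = projT1 (g (projT1 (f i))).
Proof. rewrite /fcomp; case: (f i) => j h /=; by case: (g j). Qed.

Lemma iso_comp_data {V : Ob T} {S S' : FV T V} phi psi :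
  fcomp psi phi = fid (fvobj T V S) -> fcomp phi psi = fid (fvobj T V S') ->
  fcomp (fvmap T V S') phi = fvmap T V S ->
  forall i, exists j (h : Hom (orb T S i) (orb T S' j)),
     [/\ phi i = existT _ j h, isoT h & orbmap T S i = ccomp (orbmap T S' j) h].
Proof.
move=> H1 H2 H3 i.
case Ephi: (phi i) => [j h]; exists j, h; split => //.
- have E1 := f_equal (fun F => F i) H1.
  rewrite /= /fcomp Ephi in E1.
  case Epsi: (psi j) => [i' h']; rewrite Epsi in E1.
  have ei : i' = i := f_equal (@projT1 _ _) E1.
  subst i'. have E1' := sig_eq E1.
  have E2 := f_equal (fun F => F j) H2.
  rewrite /= /fcomp Epsi Ephi in E2. have E2' := sig_eq E2.
  by exists h'.
- have E3 := f_equal (fun F => F i) H3.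
  rewrite /= /fcomp Ephi fvmapE in E3. by rewrite /orbmap -E3.
Qed.

Lemma iso_allIso {V : Ob T} (S S' : FV T V) : fv_iso T S S' -> allIso S' -> allIso S.
Proof.
case=> phi [psi [H1 H2 H3]] HS' i.
case: (iso_comp_data H1 H2 H3 i) => j [h [_ Hh ->]].
exact: isoT_comp.
Qed.

Lemma iso_card {V : Ob T} (S S' : FV T V) : fv_iso T S S' ->
  #|fidx T (fvobj T V S)| = #|fidx T (fvobj T V S')|.
Proof.
case=> phi [psi [H1 H2 H3]].
apply: (@bij_eq_card _ _ (fun i => projT1 (phi i))).
exists (fun j => projT1 (psi j)).
- move=> i; by rewrite -fcomp_tag H1.
- move=> j; by rewrite -fcomp_tag H2.
Qed.

End CC.
Arguments allIso {T V} S.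
Arguments iso_allIso {T V S S'} _ _.
Arguments iso_card {T V S S'} _.
Arguments allIso_card {T V S S'} _ _ _.
Arguments allIso_bij {T V S S'} s t _ _ _ _.

Set Implicit Arguments.

Lemma le1_all (A : finType) : #|A| <= 1 -> forall x y : A, x = y.
Proof. move/card_le1_eqP=> H x y. by apply: H. Qed.
Lemma all_le1 (A : finType) : (forall x y : A, x = y) -> #|A| <= 1.
Proof. move=> H. apply/card_le1_eqP. move=> x y _ _. apply: H. Qed.

Section DD.
Variable T : Cat.

Definition restrictObj {V : Ob T} (S : FV T V) (p : pred (fidx T (fvobj T V S))) : FObj T :=
  {| fidx := ({x : fidx T (fvobj T V S) | p x} : finType);
     fob := fun x => fob T (fvobj T V S) (val x) |}.
Definition restrict {V : Ob T} (S : FV T V) (p : pred (fidx T (fvobj T V S))) : FV T V :=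
  {| fvobj := restrictObj S p;
     fvmap := (fun x => fvmap T V S (val x)) : FHom (restrictObj S p) (rep T V) |}.

Lemma restrict_sum {V : Ob T} (S : FV T V) (p : pred (fidx T (fvobj T V S))) :
  fv_iso T S (sumV T (restrict S p) (restrict S (predC p))).
Proof.
pose phi : FHom (fvobj T V S) (fvobj T V (sumV T (restrict S p) (restrict S (predC p)))) :=
  fun x => match sumbool_of_bool (p x) with
           | left H => existT _ (inl (exist _ x H)) (cid _)
           | right H => existT _ (inr (exist (fun y => predC p y) x (negbT H))) (cid _) end.
pose psi : FHom (fvobj T V (sumV T (restrict S p) (restrict S (predC p)))) (fvobj T V S) :=
  fun z => match z as z0 return {j : _ & Hom (fob T (sumObj T (restrictObj S p) (restrictObj S (predC p))) z0) (fob T (fvobj T V S) j)} with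
           | inl y => existT _ (val y) (cid _)
           | inr y => existT _ (val y) (cid _) end.
exists phi, psi; split.
- apply: fhom_ext => x; rewrite /fcomp /phi.
  case: (sumbool_of_bool (p x)) => H /=; by rewrite cidl.
- apply: fhom_ext; case => [[x Hx]|[x Hx]]; rewrite /fcomp /phi /=;
  case: (sumbool_of_bool (p x)) => H /=; rewrite ?cidl.
  + by have E : H = Hx := bool_irrelevance H Hx; subst H.
  + by exfalso; move: Hx; rewrite H.
  + by exfalso; move: Hx; rewrite /= H.
  + by have E : Hx = negbT H := bool_irrelevance _ _; subst Hx.
- apply: fvmap_ext => x; rewrite /fcomp /phi.
  case: (sumbool_of_bool (p x)) => H /=; by rewrite fvmapE /= cidr.
Qed.

Lemma sum_inl_iso {V : Ob T} (S S' : FV T V) :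
  fv_iso T S (restrict (sumV T S S') (fun z => if z is inl _ then true else false)).
Proof.
pose R := restrict (sumV T S S') (fun z => if z is inl _ then true else false).
pose phi : FHom (fvobj T V S) (fvobj T V R) :=
  fun i => existT _ (exist _ (inl i) erefl) (cid _).
pose psi : FHom (fvobj T V R) (fvobj T V S) :=
  fun z => match z as z0 return {j : _ & Hom (fob T (fvobj T V R) z0) (fob T (fvobj T V S) j)} with
  | exist w H => match w as w0 return forall H0 : (if w0 is inl _ then true else false),
       {j : _ & Hom (fob T (fvobj T V R) (exist _ w0 H0)) (fob T (fvobj T V S) j)} with
     | inl i => fun _ => existT _ i (cid _)
     | inr j => fun H0 => False_rect _ (notF H0) end H end.
exists phi, psi; split.
- apply: fhom_ext => x; by rewrite /fcomp /phi /= cidl.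
- apply: fhom_ext; case; case => // i Hi. rewrite /fcomp /phi /= cidl.
  by have E : erefl = Hi := bool_irrelevance erefl Hi; subst Hi.
- apply: fvmap_ext => x; by rewrite /fcomp /phi /= fvmapE /= cidr.
Qed.

Lemma restrict_unital (C : Cls T) {V : Ob T} (S : FV T V) p :
  unital_wis C -> C V S -> C V (restrict S p).
Proof.
case=> [[[Hiso _] _ _] _ Hsum] HS.
have := Hsum _ _ _ (Hiso _ _ _ (restrict_sum S p) HS). by case.
Qed.

Lemma allIso_star (V : Ob T) : allIso (starV T V).
Proof. move=> i. exact: isoT_id. Qed.
Lemma allIso_nstar n (V : Ob T) : allIso (nstarV T n V).
Proof. move=> i. exact: isoT_id. Qed.
Lemma allIso_empty (V : Ob T) : allIso (emptyV T V).
Proof. by case. Qed.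

Lemma pb_allIso {V W : Ob T} (S : FV T V) (f : Hom W V) {P : FObj T}
  (r : FHom P (fvobj T V S)) (q : FHom P (rep T W)) :
  allIso S -> is_pullback (fvmap T V S) (repmap T f) r q ->
  allIso {| fvobj := P; fvmap := q |} /\
  exists t, cancel (fun a => projT1 (r a)) t /\ cancel t (fun a => projT1 (r a)).
Proof.
move=> HS Hpb; case: (pb_pbrep Hpb) => Hc H.
pose l i : FHom (rep T W) (fvobj T V S) := fun _ => existT _ i (ccomp (invOf (HS i)) f).
have Hl i : fcomp (fvmap T V S) (l i) = fcomp (repmap T f) (fid (rep T W)).
  apply: rep_ext; rewrite /fcomp /l /= fvmapE /=. by rewrite cassoc invOf_r cidl cidr.
pose u i := proj1_sig (constructive_indefinite_description _ (H _ _ _ (Hl i))).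
have Hu i : fcomp r (u i) = l i /\ fcomp q (u i) = fid (rep T W).
  rewrite /u; case: (constructive_indefinite_description _ _) => x [? _] //.
have key a : exists h, u (projT1 (r a)) tt = existT _ a h /\
       ccomp (projT2 (q a)) h = cid W /\ ccomp h (projT2 (q a)) = cid _.
  case Era: (r a) => [i ra]; case Eqa: (q a) => [[] qa] /=.
  have Hca := f_equal (fun F => F a) Hc.
  rewrite /= /fcomp Era Eqa fvmapE /= in Hca. have Hca' := sig_eq Hca.
  case: (H _ (fun _ => r a) (fun _ => q a)).
    apply: rep_ext; exact: (f_equal (fun F => F a) Hc).
  move=> w [_ Hw].
  have E1 : w = (fun _ => existT _ a (cid _)).
    apply: Hw; split; apply: rep_ext; rewrite /fcomp /=.
      by rewrite Era cidr. by rewrite Eqa cidr.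
  have E2 : w = fcomp (u i) (repmap T qa).
    apply: Hw; split.
      rewrite fcomp_assoc (proj1 (Hu i)); apply: rep_ext; rewrite /fcomp /l /= Era.
      by rewrite -cassoc -Hca' cassoc invOf_l cidl.
    rewrite fcomp_assoc (proj2 (Hu i)) fcomp_id_l; apply: rep_ext; by rewrite /= Eqa.
  rewrite E1 in E2. have E3 := f_equal (fun F => F tt) E2.
  have Hq := f_equal (fun F => F tt) (proj2 (Hu i)).
  rewrite /fcomp /= in E3 Hq.
  case Eu: (u i tt) => [a' h]; rewrite Eu in E3 Hq.
  have ea : a' = a := esym (f_equal (@projT1 _ _) E3). subst a'.
  exists h; split => //. split.
    rewrite Eqa in Hq. exact: (sig_eq Hq).
  exact: (esym (sig_eq E3)).
split.
  move=> a; case: (key a) => h [_ [E1 E2]]; exists h; split => //.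
exists (fun i => projT1 (u i tt)); split.
  move=> a; case: (key a) => h [-> _] //.
move=> i. rewrite -fcomp_tag. by rewrite (proj1 (Hu i)).
Qed.

Definition LFc (F : Ob T -> Prop) : Cls T :=
  fun V S => allIso S /\ (#|fidx T (fvobj T V S)| <= 1 \/ F V).
Arguments LFc F V S : clear implicits.

Lemma union_LFc (F : Ob T -> Prop) V (S : FV T V) :
  cls_union (F0 T) (EFinf F) V S <-> LFc F V S.
Proof.
split.
- case=> [[H|H]|[HF [n H]]].
  + split; first exact: (iso_allIso H (@allIso_empty V)).
    left; by rewrite (iso_card H) /= card_void.
  + split; first exact: (iso_allIso H (@allIso_star V)).
    left; by rewrite (iso_card H) /= card_unit.
  + split; first exact: (iso_allIso H (@allIso_nstar n V)). by right.
- case=> HI [Hc|HF].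
  + left. move: Hc; rewrite leq_eqVlt ltnS leqn0; case/orP => /eqP E.
    * right; apply: (allIso_card HI (@allIso_star V)). by rewrite E card_unit.
    * left; apply: (allIso_card HI (@allIso_empty V)). by rewrite E card_void.
  + right; split => //; exists #|fidx T (fvobj T V S)|.
    apply: (allIso_card HI (@allIso_nstar _ V)). by rewrite /= card_ord.
Qed.

Lemma orbmap_coprod {V : Ob T} {S : FV T V} (T_ : forall i, FV T (orb T S i)) x :
  orbmap T (coprodV T T_) x = ccomp (orbmap T S (tag x)) (orbmap T (T_ (tag x)) (tagged x)).
Proof.
case: x => i k. rewrite /orbmap /coprodV /indV /= /fcomp.
by case: (fvmap T _ (T_ i) k) => [[] h].
Qed.

Lemma family_iso (F : Ob T -> Prop) {a b : Ob T} (h : Hom a b) :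
  is_family F -> isoT h -> F a -> F b.
Proof. move=> HF [g _] Fa. exact: (HF _ _ g Fa). Qed.

Lemma LFc_unital (F : Ob T -> Prop) : is_family F -> unital_wis (LFc F).
Proof.
move=> HF; split; first split.
- split.
  + move=> V S S' H [HI Hc]; split; first exact: (iso_allIso (iso_sym H) HI).
    by rewrite -(iso_card H).
  + move=> U V f S P q r Hpb [HI Hc].
    case: (pb_allIso HI Hpb) => HP [t [st ts]]; split => //.
    case: Hc => [Hc|FV]; last by right; exact: (HF _ _ f FV).
    left. rewrite /=. by rewrite (bij_eq_card (f:=fun a => projT1 (r a))); last by exists t.
- move=> V _; split; [exact: allIso_star | left; by rewrite /= card_unit].
- move=> V S T_ [HI Hc] HT; split.
    move=> x; rewrite orbmap_coprod; apply: isoT_comp; first exact: HI.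
    exact: (proj1 (HT (tag x))).
  case: Hc => [Hc|FV]; last by right.
  case: (classic (F V)) => [FV|nFV]; first by right.
  left; apply: all_le1 => -[i k] [j l] /=.
  have eij := @le1_all _ Hc i j; subst j.
  case: (HT i) => _ [Hci|Fi]; last by case: nFV; exact: (family_iso HF (HI i) Fi).
  by rewrite (@le1_all _ Hci k l).
- move=> V; exists (starV T V); split; [exact: allIso_star | left; by rewrite /= card_unit].
- move=> V S S' [HI Hc]; split; split.
  + move=> i; exact: (HI (inl i)).
  + case: Hc => [Hc|]; last by right. left; apply: leq_trans Hc; by rewrite /= card_sum leq_addr.
  + move=> i; exact: (HI (inr i)).
  + case: Hc => [Hc|]; last by right. left; apply: leq_trans Hc; by rewrite /= card_sum leq_addl.
Qed.

End DD.
Arguments LFc {T} F V S.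

Set Implicit Arguments.

Section EE.
Variable T : Cat.
Hypothesis HorbT : orbital T.
Hypothesis HatT : atomic T.

Lemma cls_eq (C D : Cls T) : (forall V S, C V S <-> D V S) -> C = D.
Proof.
move=> H; apply: functional_extensionality_dep => V; apply: functional_extensionality => S.
apply: propositional_extensionality; exact: H.
Qed.

Lemma allIso_restrict {V : Ob T} (S : FV T V) p : allIso S -> allIso (restrict S p).
Proof. move=> H x; exact: (H (val x)). Qed.

Lemma nabla_family (C : Cls T) : unital_wis C -> is_family (nabla_u C).
Proof.
case=> [[[Hiso Hres] _ _] _ _] V W f H2.
case: (HorbT (fvmap T W (nstarV T 2 W)) (repmap T f)) => P [p1 [p2 Hpb]].
have HP := Hres _ _ _ _ _ _ _ Hpb H2.
case: (pb_allIso (@allIso_nstar T 2 W) Hpb) => HI [t [st ts]].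
apply: (Hiso _ _ _ _ HP); apply: (allIso_card HI (@allIso_nstar T 2 V)).
rewrite /= (bij_eq_card (f:=fun a => projT1 (p1 a))); last by exists t.
by rewrite /= !card_ord.
Qed.

Lemma unital_star_empty (C : Cls T) V : unital_wis C -> C V (starV T V) /\ C V (emptyV T V).
Proof.
move=> HC; have HC' := HC; case: HC' => [[[Hiso _] Hst _] Hne _].
have Hs : C V (starV T V) by apply: Hst; exact: Hne.
split => //.
have := restrict_unital _ pred0 HC Hs.
move=> H; apply: (Hiso _ _ _ _ H).
apply: (allIso_card (@allIso_restrict V (starV T V) pred0 (@allIso_star T V)) (@allIso_empty T V)).
by rewrite /= card_sig /= card_void; apply/eqP; rewrite -leqn0 leqNgt; apply/negP => /card_gt0P [x].
Qed.

Lemma coprod_color {V : Ob T} (S : FV T V) m (c : fidx T (fvobj T V S) -> 'I_m) :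
  fv_iso T S (@coprodV T V (nstarV T m V) (fun i => restrict S (fun x => c x == i))).
Proof.
set TT := (fun i => restrict S (fun x => c x == i)).
pose phi : FHom (fvobj T V S) (fvobj T V (@coprodV T V (nstarV T m V) TT)) :=
  fun x => existT _ (existT _ (c x) (exist _ x (eqxx (c x)))) (cid _).
pose psi : FHom (fvobj T V (@coprodV T V (nstarV T m V) TT)) (fvobj T V S) :=
  fun z => existT _ (val (tagged z)) (cid _).
exists phi, psi; split.
- apply: fhom_ext => x; by rewrite /fcomp /phi /psi /= cidl.
- apply: fhom_ext => -[i [x H]]; rewrite /fcomp /phi /psi /= cidl.
  have Ei := eqP H; subst i.
  by have E : H = eqxx (c x) := bool_irrelevance _ _; subst H.
- apply: fvmap_ext => x; rewrite /fcomp /phi /coprodV /indV /= /fcomp fvmapE /=.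
  by rewrite cidr cidl.
Qed.

Lemma card_restrict_lt (A : finType) (p : pred A) y : ~~ p y -> #|{: {x | p x}}| < #|A|.
Proof.
move=> Hy; rewrite card_sig -(cardC p) -{1}(addn0 #|[pred x | p x]|).
have -> : #|[pred x | p x]| = #|p| by apply: eq_card.
rewrite ltn_add2l; apply/card_gt0P; by exists y.
Qed.

Lemma unital_allIso_in (C : Cls T) {V : Ob T} (S : FV T V) :
  unital_wis C -> allIso S -> (#|fidx T (fvobj T V S)| <= 1 \/ C V (nstarV T 2 V)) -> C V S.
Proof.
move=> HC HI Hc; have HC' := HC; case: HC' => [[[Hiso _] _ Hcop] _ _].
case: (unital_star_empty V HC) => Hs He.
have small : forall S' : FV T V, allIso S' -> #|fidx T (fvobj T V S')| <= 1 -> C V S'.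
  move=> S' HI'; rewrite leq_eqVlt ltnS leqn0; case/orP => /eqP E.
  - apply: (Hiso _ _ _ _ Hs); apply: iso_sym; apply: (allIso_card HI' (@allIso_star T V)).
    by rewrite E card_unit.
  - apply: (Hiso _ _ _ _ He); apply: iso_sym; apply: (allIso_card HI' (@allIso_empty T V)).
    by rewrite E card_void.
case: Hc => [Hc|H2]; first exact: small.
move: {2}#|fidx T (fvobj T V S)| (leqnn #|fidx T (fvobj T V S)|) => n.
elim: n S HI => [|n IH] S' HI' Hn.
  by apply: small => //; apply: leq_trans Hn _.
case: (leqP #|fidx T (fvobj T V S')| 1) => Hle; first exact: small.
have : 0 < #|fidx T (fvobj T V S')| by apply: ltn_trans Hle.
case/card_gt0P => a _.
have : exists b, b != a.
  apply/existsP. have : ~~ (#|fidx T (fvobj T V S')| <= 1) by rewrite -ltnNge.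
  apply: contraR; rewrite negb_exists => /forallP Hb; apply: all_le1 => x y.
  by rewrite (eqP (negbNE (Hb x))) (eqP (negbNE (Hb y))).
case=> b Hb.
pose c x : 'I_2 := if x == a then ord0 else ord_max.
apply: (Hiso _ _ _ (iso_sym (coprod_color S' c))).
apply: Hcop => // i; apply: IH; first exact: allIso_restrict.
rewrite -ltnS; apply: leq_trans Hn.
case: (i =P ord0) => Ei.
- apply: (@card_restrict_lt _ _ b); by rewrite /c (negbTE Hb) Ei.
- apply: (@card_restrict_lt _ _ a); rewrite /c eqxx; apply/eqP => E; apply: Ei; by rewrite -E.
Qed.

Definition RF (F : Ob T -> Prop) : Cls T := fun V S =>
  forall W (f : Hom W V) (l1 l2 : FHom (rep T W) (fvobj T V S)),
    fcomp (fvmap T V S) l1 = repmap T f -> fcomp (fvmap T V S) l2 = repmap T f -> l1 <> l2 -> F W.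
Arguments RF F V S : clear implicits.

Lemma inl_inj {V : Ob T} (S S' : FV T V) W (l1 l2 : FHom (rep T W) (fvobj T V S)) :
  fcomp ((fun i => existT _ (inl i) (cid _)) : FHom (fvobj T V S) (fvobj T V (sumV T S S'))) l1 =
  fcomp ((fun i => existT _ (inl i) (cid _)) : FHom (fvobj T V S) (fvobj T V (sumV T S S'))) l2 ->
  l1 = l2.
Proof.
move=> E; apply: rep_ext; have E' := f_equal (fun F => F tt) E.
rewrite /fcomp /= in E'. case: (l1 tt) E' => i h; case: (l2 tt) => j h' E'.
have eij : inl i = inl j := f_equal (@projT1 _ _) E'.
case: eij => eij; subst j. have := sig_eq E'; by rewrite !cidl => ->.
Qed.

Lemma inr_inj {V : Ob T} (S S' : FV T V) W (l1 l2 : FHom (rep T W) (fvobj T V S')) :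
  fcomp ((fun i => existT _ (inr i) (cid _)) : FHom (fvobj T V S') (fvobj T V (sumV T S S'))) l1 =
  fcomp ((fun i => existT _ (inr i) (cid _)) : FHom (fvobj T V S') (fvobj T V (sumV T S S'))) l2 ->
  l1 = l2.
Proof.
move=> E; apply: rep_ext; have E' := f_equal (fun F => F tt) E.
rewrite /fcomp /= in E'. case: (l1 tt) E' => i h; case: (l2 tt) => j h' E'.
have eij : inr i = inr j := f_equal (@projT1 _ _) E'.
case: eij => eij; subst j. have := sig_eq E'; by rewrite !cidl => ->.
Qed.

Lemma RF_unital (F : Ob T -> Prop) : is_family F -> unital_wis (RF F).
Proof.
move=> HF; split; first split; first split.
- move=> V S S' [phi [psi [H1 H2 H3]]] HS W f l1 l2 E1 E2 Ne.
  have H4 := iso_fvmap_psi H1 H2 H3.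
  apply: (HS W f (fcomp psi l1) (fcomp psi l2)).
  + by rewrite fcomp_assoc H4.
  + by rewrite fcomp_assoc H4.
  + move=> E; apply: Ne. by rewrite -(fcomp_id_l l1) -(fcomp_id_l l2) -H2 -!fcomp_assoc E.
- move=> U V g S P q r Hpb HS W h l1 l2 E1 E2 Ne.
  case: Hpb => Hc HU.
  apply: (HS W (ccomp g h) (fcomp r l1) (fcomp r l2)).
  + by rewrite fcomp_assoc Hc -fcomp_assoc /= E1 repmap_comp.
  + by rewrite fcomp_assoc Hc -fcomp_assoc /= E2 repmap_comp.
  + move=> E; apply: Ne.
    have Hc' : fcomp (fvmap T V S) (fcomp r l1) = fcomp (repmap T g) (fcomp q l1).
      by rewrite !fcomp_assoc Hc.
    case: (HU _ _ _ Hc') => u [_ Hu].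
    rewrite -(Hu l1) //; apply: Hu; split => //. by rewrite E1 -E2.
- move=> V _ W f l1 l2 E1 E2 Ne; exfalso; apply: Ne.
  by rewrite -(fcomp_id_l l1) -(fcomp_id_l l2) /= E1 E2.
- move=> V S T_ HS HT W f l1 l2 E1 E2 Ne.
  pose proj : FHom (fvobj T V (coprodV T T_)) (fvobj T V S) :=
    fun x => existT _ (tag x) (orbmap T (T_ (tag x)) (tagged x)).
  have Hp : fvmap T V (coprodV T T_) = fcomp (fvmap T V S) proj.
    apply: fvmap_ext => x. have := orbmap_coprod x. rewrite /orbmap => ->.
    rewrite /fcomp /proj /=. by case: (fvmap T V S (tag x)) => [[] h].
  rewrite Hp -fcomp_assoc in E1. rewrite Hp -fcomp_assoc in E2.
  case: (classic (fcomp proj l1 = fcomp proj l2)) => Em; last exact: (HS W f _ _ E1 E2 Em).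
  have Em' := f_equal (fun F => F tt) Em.
  rewrite /fcomp /proj /= in Em'.
  case El1: (l1 tt) Em' => [[i k] h]; case El2: (l2 tt) => [[j k'] h'] /= Em'.
  have eij : i = j := f_equal (@projT1 _ _) Em'. subst j.
  have Em'' := sig_eq Em'.
  apply: (HT i W _ (fun _ => existT _ k h) (fun _ => existT _ k' h')).
  + apply: rep_ext; by rewrite /fcomp fvmapE.
  + apply: rep_ext; rewrite /fcomp fvmapE /=. by rewrite -Em''.
  + move=> E; apply: Ne; apply: rep_ext; rewrite El1 El2.
    have E' := f_equal (fun F => F tt) E. simpl in E'.
    have ekk : k = k' := f_equal (@projT1 _ _) E'. subst k'.
    by rewrite (sig_eq E').
- move=> V; exists (starV T V) => W f l1 l2 E1 E2 Ne; exfalso; apply: Ne.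
  by rewrite -(fcomp_id_l l1) -(fcomp_id_l l2) /= E1 E2.
- move=> V S S' HS; split.
  + move=> W f l1 l2 E1 E2 Ne.
    pose il : FHom (fvobj T V S) (fvobj T V (sumV T S S')) := fun i => existT _ (inl i) (cid _).
    have Hil : fcomp (fvmap T V (sumV T S S')) il = fvmap T V S.
      apply: fvmap_ext => i; by rewrite /fcomp /il /= fvmapE /= cidr.
    apply: (HS W f (fcomp il l1) (fcomp il l2)).
    * by rewrite fcomp_assoc Hil.
    * by rewrite fcomp_assoc Hil.
    * by move/inl_inj.
  + move=> W f l1 l2 E1 E2 Ne.
    pose il : FHom (fvobj T V S') (fvobj T V (sumV T S S')) := fun i => existT _ (inr i) (cid _).
    have Hil : fcomp (fvmap T V (sumV T S S')) il = fvmap T V S'.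
      apply: fvmap_ext => i; by rewrite /fcomp /il /= fvmapE /= cidr.
    apply: (HS W f (fcomp il l1) (fcomp il l2)).
    * by rewrite fcomp_assoc Hil.
    * by rewrite fcomp_assoc Hil.
    * by move/inr_inj.
Qed.

End EE.
Arguments RF {T} F V S.

Set Implicit Arguments.

Section PBC0.
Variable T : Cat.

Lemma fcomp_pt {A B C : FObj T} (g : FHom B C) (f : FHom A B) i :
  fcomp g f i = existT _ (projT1 (g (projT1 (f i)))) (ccomp (projT2 (g (projT1 (f i)))) (projT2 (f i))).
Proof. rewrite /fcomp; case: (f i) => j h /=; by case: (g j). Qed.

Lemma sig_unit_eq {X Y : Ob T} (a b : unit) (x y : Hom X Y) :
  existT (fun _ : unit => Hom X Y) a x = existT (fun _ => Hom X Y) b y -> x = y.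
Proof. case: a; case: b => E; exact: (sig_eq E). Qed.

Lemma sig_unit_intro {X Y : Ob T} (a b : unit) (x y : Hom X Y) :
  x = y -> existT (fun _ : unit => Hom X Y) a x = existT (fun _ => Hom X Y) b y.
Proof. case: a; case: b => ->; done. Qed.

Lemma nested_sig_eq {I : Type} {J : I -> Type} {P : {i : I & J i} -> Type} i k1 k2 m1 m2 :
  existT P (existT J i k1) m1 = existT P (existT J i k2) m2 ->
  existT (fun k => P (existT J i k)) k1 m1 = existT (fun k => P (existT J i k)) k2 m2.
Proof.
move=> E; have E1 := f_equal (@projT1 _ _) E; simpl in E1.
have ek := inj_pair2 _ _ _ _ _ E1. subst k2.
by rewrite (inj_pair2 _ _ _ _ _ E).
Qed.

Definition projC {V : Ob T} {S : FV T V} (T_ : forall i, FV T (orb T S i)) :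
  FHom (fvobj T V (coprodV T T_)) (fvobj T V S) :=
  fun x => existT _ (tag x) (orbmap T (T_ (tag x)) (tagged x)).
Arguments projC {V S} T_ i.

Lemma projC_eq {V : Ob T} {S : FV T V} (T_ : forall i, FV T (orb T S i)) :
  fvmap T V (coprodV T T_) = fcomp (fvmap T V S) (projC T_).
Proof.
apply: fvmap_ext => x. have := orbmap_coprod x. rewrite /orbmap => ->.
rewrite /fcomp /projC /=. by case: (fvmap T V S (tag x)) => [[] h].
Qed.

Lemma pb_comm {A B C : FObj T} {f : FHom A C} {g : FHom B C} {P : FObj T}
  {p1 : FHom P A} {p2 : FHom P B} : is_pullback f g p1 p2 -> fcomp f p1 = fcomp g p2.
Proof. by case. Qed.

End PBC0.
Arguments sig_unit_eq {T X Y a b x y} _.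
Arguments sig_unit_intro {T X Y a b x y} _.
Arguments fcomp_pt {T A B C} g f i.
Arguments pb_comm {T A B C f g P p1 p2} _.
Arguments projC_eq {T V S} T_.
Arguments projC {T V S} T_ i.

Section PBC.
Variable T : Cat.
Variables (V W : Ob T) (S : FV T V) (T_ : forall i, FV T (orb T S i)) (f : Hom W V).
Variables (Q : FObj T) (r' : FHom Q (fvobj T V S)) (q' : FHom Q (rep T W)).
Hypothesis Hq : is_pullback (fvmap T V S) (repmap T f) r' q'.
Variables (Pb : fidx T Q -> FObj T)
  (rb : forall b, FHom (Pb b) (fvobj T _ (T_ (projT1 (r' b)))))
  (qb : forall b, FHom (Pb b) (rep T (fob T Q b))).
Hypothesis Hb : forall b,
  is_pullback (fvmap T _ (T_ (projT1 (r' b)))) (repmap T (projT2 (r' b))) (rb b) (qb b).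

Definition Qv : FV T W := {| fvobj := Q; fvmap := q' |}.
Definition RR (b : fidx T (fvobj T W Qv)) : FV T (orb T Qv b) := {| fvobj := Pb b; fvmap := qb b |}.
Definition rr : FHom (fvobj T W (coprodV T RR)) (fvobj T V (coprodV T T_)) :=
  fun z => existT _ (existT _ (projT1 (r' (tag z))) (projT1 (rb (tag z) (tagged z))))
                    (projT2 (rb (tag z) (tagged z))).

Lemma square : fcomp (projC T_) rr = fcomp r' (projC RR).
Proof.
apply: fhom_ext => -[b c]; rewrite !fcomp_pt /=.
congr (existT _ _ _).
have := f_equal (fun F => F c) (pb_comm (Hb b)); rewrite !fcomp_pt /= fvmapE /=.
move/sig_unit_eq. by rewrite /orbmap fvmapE.
Qed.

Lemma pb_coprod : is_pullback (fvmap T V (coprodV T T_)) (repmap T f) rr (fvmap T W (coprodV T RR)).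
Proof.
have Hcomm : fcomp (fvmap T V (coprodV T T_)) rr = fcomp (repmap T f) (fvmap T W (coprodV T RR)).
  rewrite !projC_eq -!fcomp_assoc square !fcomp_assoc (pb_comm Hq) //.
apply: pbrep_pb; split => // X x1 x2 Hx.
set y1 := fcomp (projC T_) x1.
have Hy : fcomp (fvmap T V S) y1 = fcomp (repmap T f) x2.
  by rewrite /y1 fcomp_assoc -projC_eq.
case: (pb_pbrep Hq) => _ HQ.
case: (HQ _ _ _ Hy) => w [[W1 W2] Wu].
case Ex: (x1 tt) => [[i k] h].
case Ew: (w tt) => [b hb].
have Ey := f_equal (fun F => F tt) W1.
rewrite /y1 !fcomp_pt Ex Ew /= in Ey.
have ei : projT1 (r' b) = i := f_equal (@projT1 _ _) Ey. subst i.
have Ey' := sig_eq Ey.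
pose z1 : FHom (rep T X) (fvobj T _ (T_ (projT1 (r' b)))) := fun _ => existT _ k h.
pose z2 : FHom (rep T X) (rep T (fob T Q b)) := fun _ => existT _ tt hb.
have Hz : fcomp (fvmap T _ (T_ (projT1 (r' b)))) z1 = fcomp (repmap T (projT2 (r' b))) z2.
  apply: rep_ext; rewrite !fcomp_pt /= fvmapE /=; apply: sig_unit_intro. by rewrite Ey'.
case: (pb_pbrep (Hb b)) => _ HB.
case: (HB _ _ _ Hz) => v [[V1 V2] Vu].
case Ev: (v tt) => [c hc].
have Ev1 := f_equal (fun F => F tt) V1; rewrite fcomp_pt Ev /= in Ev1.
have Ev2 := f_equal (fun F => F tt) V2; rewrite fcomp_pt Ev /= in Ev2.
have Ev2' := sig_unit_eq Ev2.
pose u : FHom (rep T X) (fvobj T W (coprodV T RR)) := fun _ => existT _ (existT _ b c) hc.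
have U1 : fcomp rr u = x1.
  apply: rep_ext; rewrite fcomp_pt Ex /=.
  exact: (f_equal (fun s : {k0 : fidx T (fvobj T _ (T_ (projT1 (r' b)))) &
             Hom X (fob T (fvobj T _ (T_ (projT1 (r' b)))) k0)} =>
     existT (fun z => Hom X (fob T (coprodObj T T_) z)) (existT _ (projT1 (r' b)) (projT1 s)) (projT2 s)) Ev1).
have U2 : fcomp (fvmap T W (coprodV T RR)) u = x2.
  rewrite projC_eq /= -W2 -fcomp_assoc; congr fcomp.
  apply: rep_ext; rewrite fcomp_pt Ew /=. by rewrite /orbmap fvmapE /= Ev2'.
exists u; split => // u' [U1' U2'].
have Hw' : w = fcomp (projC RR) u'.
  apply: Wu; split.
  - by rewrite fcomp_assoc -square -fcomp_assoc U1'.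
  - by rewrite fcomp_assoc -U2' projC_eq.
case Eu': (u' tt) => [[b' c'] h'].
have Ew' := f_equal (fun F => F tt) Hw'; rewrite fcomp_pt Ew Eu' /= in Ew'.
have eb : b' = b := esym (f_equal (@projT1 _ _) Ew'). subst b'.
have Ew'' := sig_eq Ew'.
have : v = (fun _ => existT _ c' h' : {c0 : fidx T (Pb b) & Hom X (fob T (Pb b) c0)}).
  apply: Vu; split.
  - apply: rep_ext; rewrite fcomp_pt /=.
    have := f_equal (fun F => F tt) U1'; rewrite fcomp_pt Eu' Ex /=.
    exact: nested_sig_eq.
  - apply: rep_ext; rewrite fcomp_pt /=; apply: sig_unit_intro.
    by rewrite Ew'' /orbmap fvmapE.
move=> Evv; have := f_equal (fun F => F tt) Evv; rewrite Ev => Ecc.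
have ec : c' = c := esym (f_equal (@projT1 _ _) Ecc). subst c'.
apply: rep_ext; by rewrite Eu' /u (sig_eq Ecc).
Qed.

End PBC.

Set Implicit Arguments.

Lemma inj_surj_bij (A B : finType) (g : A -> B) :
  injective g -> (forall y, exists x, g x = y) -> bijective g.
Proof.
move=> Hi Hs.
pose h y := proj1_sig (constructive_indefinite_description _ (Hs y)).
have Hh y : g (h y) = y by rewrite /h; case: (constructive_indefinite_description _ _).
exists h => [x|y] //. apply: Hi. by rewrite Hh.
Qed.

Section GG.
Variable T : Cat.

Definition castH {A : FObj T} {i j : fidx T A} (E : i = j) : Hom (fob T A i) (fob T A j) :=
  match E in _ = j0 return Hom (fob T A i) (fob T A j0) with erefl => cid _ end.

Lemma castH_existT {X : Ob T} {A : FObj T} {i j : fidx T A} (E : i = j) (h : Hom X (fob T A i)) :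
  existT (fun k => Hom X (fob T A k)) j (ccomp (castH E) h) = existT _ i h.
Proof. case: j / E. by rewrite /= cidl. Qed.

Lemma castH_existT0 {A : FObj T} {i j : fidx T A} (E : i = j) :
  existT (fun k => Hom (fob T A i) (fob T A k)) j (castH E) = existT _ i (cid _).
Proof. by case: j / E. Qed.

Lemma fhom_cancel {A B C : FObj T} (m : FHom B C) (a b : FHom A B) :
  injective (fun x => projT1 (m x)) -> (forall x, isoT (projT2 (m x))) ->
  fcomp m a = fcomp m b -> a = b.
Proof.
move=> Hinj Hiso E; apply: fhom_ext => i.
have := f_equal (fun F => F i) E; rewrite !fcomp_pt.
case: (a i) => j h; case: (b i) => j' h' /= E'.
have ej : j = j' by apply: Hinj; exact: (f_equal (@projT1 _ _) E').
subst j'. have := sig_eq E'. move/(isoT_cancel (Hiso j)) => ->. done.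
Qed.

Lemma iso_of_map {V : Ob T} (X S : FV T V) (m : FHom (fvobj T V X) (fvobj T V S)) :
  fcomp (fvmap T V S) m = fvmap T V X -> (forall x, isoT (projT2 (m x))) ->
  bijective (fun x => projT1 (m x)) -> fv_iso T X S.
Proof.
move=> Hm Hiso [t st ts].
pose psi : FHom (fvobj T V S) (fvobj T V X) :=
  fun y => existT _ (t y) (ccomp (invOf (Hiso (t y))) (castH (esym (ts y)))).
have H2 : fcomp m psi = fid _.
  apply: fhom_ext => y; rewrite fcomp_pt /psi /=.
  rewrite cassoc invOf_r cidl. exact: castH_existT0.
exists m, psi; split => //.
apply: (fhom_cancel (m:=m)) => //; first by move=> x y /= E; rewrite -(st x) -(st y) E.
by rewrite fcomp_assoc H2 fcomp_id_l fcomp_id_r.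
Qed.

Definition SubO {V : Ob T} (X S : FV T V) :=
  exists m : FHom (fvobj T V X) (fvobj T V S),
    [/\ fcomp (fvmap T V S) m = fvmap T V X, forall x, isoT (projT2 (m x))
      & injective (fun x => projT1 (m x))].

Lemma Sub_iso {V : Ob T} (X S S' : FV T V) : SubO X S -> fv_iso T S S' -> SubO X S'.
Proof.
case=> m [M1 M2 M3] [phi [psi [H1 H2 H3]]].
exists (fcomp phi m); split.
- by rewrite fcomp_assoc H3.
- move=> x; rewrite fcomp_pt /=.
  case: (iso_comp_data H1 H2 H3 (projT1 (m x))) => j [h [E Hh _]].
  rewrite E /=; apply: isoT_comp => //.
- move=> x y /=; rewrite !fcomp_tag => E; apply: M3 => /=.
  have K j : projT1 (psi (projT1 (phi j))) = j by rewrite -fcomp_tag H1.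
  by rewrite -(K (projT1 (m x))) E K.
Qed.

Lemma Sub_restrict {V : Ob T} (S : FV T V) p : SubO (restrict S p) S.
Proof.
pose m : FHom (fvobj T V (restrict S p)) (fvobj T V S) := fun x => existT _ (val x) (cid _).
exists m; split.
- apply: fvmap_ext => x; by rewrite fcomp_pt /= fvmapE /= cidr.
- move=> x; exact: isoT_id.
- move=> x y /= E; exact: val_inj.
Qed.

Lemma Sub_inl {V : Ob T} (S S' : FV T V) : SubO S (sumV T S S').
Proof.
pose m : FHom (fvobj T V S) (fvobj T V (sumV T S S')) := fun x => existT _ (inl x) (cid _).
exists m; split.
- apply: fvmap_ext => x; by rewrite fcomp_pt /= fvmapE /= cidr.
- move=> x; exact: isoT_id.
- by move=> x y [].
Qed.

Lemma Sub_inr {V : Ob T} (S S' : FV T V) : SubO S' (sumV T S S').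
Proof.
pose m : FHom (fvobj T V S') (fvobj T V (sumV T S S')) := fun x => existT _ (inr x) (cid _).
exists m; split.
- apply: fvmap_ext => x; by rewrite fcomp_pt /= fvmapE /= cidr.
- move=> x; exact: isoT_id.
- by move=> x y [].
Qed.

Lemma Sub_orbmap {V : Ob T} {X S : FV T V} {m : FHom (fvobj T V X) (fvobj T V S)} :
  fcomp (fvmap T V S) m = fvmap T V X ->
  forall x, orbmap T X x = ccomp (orbmap T S (projT1 (m x))) (projT2 (m x)).
Proof.
move=> Hm x; have E := f_equal (fun F => F x) Hm; rewrite /= fcomp_pt in E.
rewrite /orbmap; move: E; case: (fvmap T V X x) => [[] h] E.
by rewrite -(sig_unit_eq E).
Qed.

Lemma Sub_LFc (F : Ob T -> Prop) {V : Ob T} (X S : FV T V) : SubO X S -> LFc F V S -> LFc F V X.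
Proof.
case=> m [M1 M2 M3] [HI Hc]; split.
- move=> x; rewrite (Sub_orbmap M1); apply: isoT_comp; [exact: HI | exact: M2].
- case: Hc => [Hc|]; last by move=> ?; right. left; apply: leq_trans Hc; exact: leq_card M3.
Qed.

Lemma Sub_C (C : Cls T) {V : Ob T} (X S : FV T V) : unital_wis C -> SubO X S -> C V S -> C V X.
Proof.
move=> HC [m [M1 M2 M3]] HS.
case: HC => [[[Hiso _] _ _] _ Hsum].
set sg := fun x => projT1 (m x).
pose Y := restrict S (fun s => s \notin codom sg).
pose m2 : FHom (fvobj T V (sumV T X Y)) (fvobj T V S) :=
  fun z => match z as z0 return {j : _ & Hom (fob T (fvobj T V (sumV T X Y)) z0) (fob T (fvobj T V S) j)} with
  | inl x => m x | inr y => existT _ (val y) (cid _) end.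
have Hiso2 : fv_iso T (sumV T X Y) S.
  apply: (@iso_of_map V (sumV T X Y) S m2).
  - apply: fhom_ext => -[x|y] /=.
    + exact: (f_equal (fun F => F x) M1).
    + rewrite fcomp_pt /= cidr. by case: (fvmap T V S (sval y)).
  - case => [x|y] //=; exact: isoT_id.
  - apply: inj_surj_bij.
    + move=> [x1|y1] [x2|y2] /= E.
      * by rewrite (M3 _ _ E).
      * exfalso; have E' : sg x1 = val y2 := E.
        move: (valP y2); rewrite /= -E'; by rewrite (codom_f sg x1).
      * exfalso; have E' : val y1 = sg x2 := E.
        move: (valP y1); rewrite /= E'; by rewrite (codom_f sg x2).
      * by rewrite (val_inj E).
    + move=> s; case: (boolP (s \in codom sg)).
      * case/codomP => x ->; by exists (inl x).
      * move=> Hs; by exists (inr (exist _ s Hs)).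
have := Hsum _ _ _ (Hiso _ _ _ (iso_sym Hiso2) HS). by case.
Qed.

End GG.

Set Implicit Arguments.

Section II.
Variable T : Cat.

Lemma Sub_coprod {V : Ob T} {S : FV T V} (T_ : forall i, FV T (orb T S i)) (X : FV T V) :
  SubO X (coprodV T T_) ->
  exists (p0 : pred (fidx T (fvobj T V S)))
         (p : forall i' : fidx T (restrictObj S p0), pred (fidx T (fvobj T _ (T_ (val i'))))),
    fv_iso T X (@coprodV T V (restrict S p0) (fun i' => restrict (T_ (val i')) (p i'))).
Proof.
case=> m [M1 M2 M3].
set sg := fun x => projT1 (m x).
pose p0 := fun i => [exists x, tag (sg x) == i].
pose p := fun (i' : fidx T (restrictObj S p0)) k => [exists x, sg x == existT _ (val i') k].
exists p0, p.
set T0 := (fun i' => restrict (T_ (val i')) (p i')).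
have P1 : forall x, p0 (tag (sg x)) by move=> x; apply/existsP; exists x.
have P2 : forall x, p (exist _ (tag (sg x)) (P1 x)) (tagged (sg x)).
  move=> x; apply/existsP; exists x => /=. by case: (sg x).
pose m' : FHom (fvobj T V X) (fvobj T V (@coprodV T V (restrict S p0) T0)) :=
  fun x => existT _ (existT _ (exist _ (tag (sg x)) (P1 x)) (exist _ (tagged (sg x)) (P2 x)))
                    (projT2 (m x)).
apply: (@iso_of_map T V X _ m').
- rewrite -M1; apply: fhom_ext => x; rewrite !fcomp_pt !projC_eq !fcomp_pt /=. done.
- move=> x; exact: M2.
- pose Phi := fun z : {i' : fidx T (restrictObj S p0) & fidx T (fvobj T _ (T0 i'))} =>
     existT (fun i => fidx T (fvobj T _ (T_ i))) (val (tag z)) (val (tagged z)).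
  have Phi_inj : injective Phi.
    move=> [[i1 H1] [k1 K1]] [[i2 H2] [k2 K2]] /= E.
    have ei : i1 = i2 := f_equal (@projT1 _ _) E. subst i2.
    have ek := inj_pair2 _ _ _ _ _ E. simpl in ek. subst k2.
    have -> : H1 = H2 := bool_irrelevance _ _.
    by have -> : K1 = K2 := bool_irrelevance _ _.
  have Phim x : Phi (projT1 (m' x)) = sg x by rewrite /Phi /=; case: (sg x).
  apply: inj_surj_bij.
  + move=> x y E; apply: M3. have := f_equal Phi E. by rewrite !Phim.
  + move=> z; have := valP (tagged z); case/existsP => x /eqP Ex.
    exists x; apply: Phi_inj. by rewrite Phim Ex.
Qed.

End II.

Set Implicit Arguments.

Section FF.
Variable T : Cat.
Hypothesis HorbT : orbital T.
Hypothesis HatT : atomic T.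

Lemma L_eq (F : Ob T -> Prop) : cls_union (F0 T) (EFinf F) = LFc F.
Proof. apply: cls_eq => V S; exact: union_LFc. Qed.

Lemma L_unital (F : Ob T -> Prop) : is_family F -> unital_wis (cls_union (F0 T) (EFinf F)).
Proof. move=> HF; rewrite L_eq; exact: LFc_unital. Qed.

Lemma two_card : #|'I_2| <= 1 = false.
Proof. by rewrite card_ord. Qed.

Lemma L_adj (F : Ob T -> Prop) (C : Cls T) : unital_wis C ->
  (cls_le (cls_union (F0 T) (EFinf F)) C <-> fam_le F (nabla_u C)).
Proof.
move=> HC; rewrite L_eq; split.
- move=> H V FV; apply: H; split; [exact: allIso_nstar | by right].
- move=> H V S [HI [Hc|FV]]; apply: (unital_allIso_in HC HI); first by left.
  right; exact: H.
Qed.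

Lemma L_ff (F F' : Ob T -> Prop) :
  cls_le (cls_union (F0 T) (EFinf F)) (cls_union (F0 T) (EFinf F')) -> fam_le F F'.
Proof.
rewrite !L_eq => H V FV.
have : LFc F V (nstarV T 2 V) by split; [exact: allIso_nstar | by right].
move/H => [_ [|//]]. by rewrite /= card_ord.
Qed.

Lemma RF_nabla (F : Ob T -> Prop) V : RF F V (nstarV T 2 V) -> F V.
Proof.
move=> H; apply: (H V (cid V) (fun _ => existT _ (@Ordinal 2 0 isT) (cid V))
                               (fun _ => existT _ (@Ordinal 2 1 isT) (cid V))).
- apply: rep_ext; by rewrite /fcomp /= cidl.
- apply: rep_ext; by rewrite /fcomp /= cidl.
- move=> E; have := f_equal (fun F => val (projT1 (F tt))) E. by [].
Qed.

Lemma C_le_RF (C : Cls T) (F : Ob T -> Prop) : unital_wis C -> fam_le (nabla_u C) F -> cls_le C (RF F).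
Proof.
move=> HC HCF V S HS W f l1 l2 E1 E2 Ne.
have HC' := HC; case: HC' => [[[Hiso Hres] _ _] _ _].
case: (HorbT (fvmap T V S) (repmap T f)) => P [r [q Hpb]].
have HP := Hres _ _ _ _ _ _ _ Hpb HS.
case: (pb_pbrep Hpb) => Hc H.
have Hl1 : fcomp (fvmap T V S) l1 = fcomp (repmap T f) (fid (rep T W)) by rewrite fcomp_id_r.
have Hl2 : fcomp (fvmap T V S) l2 = fcomp (repmap T f) (fid (rep T W)) by rewrite fcomp_id_r.
case: (H _ _ _ Hl1) => u1 [[U1 Q1] _]; case: (H _ _ _ Hl2) => u2 [[U2 Q2] _].
have Nu : u1 tt <> u2 tt.
  move=> E; apply: Ne; rewrite -U1 -U2; congr fcomp; exact: rep_ext.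
have sec : forall u : FHom (rep T W) P, fcomp q u = fid (rep T W) ->
   exists a h, u tt = existT _ a h /\ ccomp (projT2 (q a)) h = cid W /\ isoT (projT2 (q a)).
  move=> u Qu; case Eu: (u tt) => [a h]; exists a, h; split => //.
  have := f_equal (fun F => F tt) Qu; rewrite /fcomp Eu /=.
  case: (q a) => [[] qa] /= Eq. have Eq' := sig_eq Eq. split => //.
  case: (HatT _ _ qa) => [|g [G1 G2]]; first by exists h.
  by exists g.
case: (sec _ Q1) => a1 [h1 [Eu1 [Hh1 I1]]]; case: (sec _ Q2) => a2 [h2 [Eu2 [Hh2 I2]]].
have Na : a1 != a2.
  apply/eqP => ea; subst a2; apply: Nu; rewrite Eu1 Eu2.
  by rewrite (isoT_inv_unique I1 Hh1 Hh2).
pose PW : FV T W := {| fvobj := P; fvmap := q |}.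
have HR := restrict_unital (PW) (fun x => (x == a1) || (x == a2)) HC HP.
apply: HCF; rewrite /nabla_u.
apply: (Hiso _ _ _ _ HR).
apply: (allIso_card _ (@allIso_nstar T 2 W)).
- move=> [x Hx]; rewrite /orbmap /=. have H0 : isoT (projT2 (q x)) by case/orP: Hx => /eqP ->. exact: H0.
- rewrite /= card_sig card_ord.
  have -> : #|[pred x | (x == a1) || (x == a2)]| = #|pred2 a1 a2| by apply: eq_card.
  by rewrite card2 Na.
Qed.

Lemma RF_adj (C : Cls T) (F : Ob T -> Prop) : unital_wis C ->
  (fam_le (nabla_u C) F <-> cls_le C (RF F)).
Proof.
move=> HC; split; first exact: C_le_RF.
move=> H V HV; apply: RF_nabla; exact: H.
Qed.

Lemma RF_ff (F F' : Ob T -> Prop) : is_family F -> cls_le (RF F) (RF F') -> fam_le F F'.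
Proof.
move=> HF H V FV; apply: RF_nabla; apply: H => W f _ _ _ _ _.
exact: (HF _ _ f FV).
Qed.

Lemma LFc_le_RF (F : Ob T -> Prop) : is_family F -> cls_le (LFc F) (RF F).
Proof.
move=> HF V S [HI [Hc|FV]] W f l1 l2 E1 E2 Ne; last exact: (HF _ _ f FV).
exfalso; apply: Ne; apply: rep_ext.
have := f_equal (fun F => F tt) E1; have := f_equal (fun F => F tt) E2.
rewrite /fcomp /=.
case: (l1 tt) => i h; case: (l2 tt) => j h'.
rewrite !fvmapE /= => E2' E1'.
have eij := @le1_all _ Hc i j; subst j.
have := isoT_cancel (HI i) (etrans (sig_eq E1') (esym (sig_eq E2'))). by move=> ->.
Qed.

End FF.

Unset Implicit Arguments.

Section JJ.
Variable T : Cat.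
Hypothesis HorbT : orbital T.
Hypothesis HatT : atomic T.

Lemma pb_choice {A B C : FObj T} (f : FHom A C) (g : FHom B C) :
  {P : FObj T & {p1 : FHom P A & {p2 : FHom P B | is_pullback f g p1 p2}}}.
Proof.
have H := HorbT A B C f g.
case: (constructive_indefinite_description _ H) => P H1.
case: (constructive_indefinite_description _ H1) => p1 H2.
case: (constructive_indefinite_description _ H2) => p2 H3.
by exists P, p1, p2.
Qed.

Variable (C : Cls T) (F' : Ob T -> Prop).

Inductive Gen : forall V : Ob T, FV T V -> Prop :=
| gC (V : Ob T) (S : FV T V) : C V S -> Gen V S
| gL (V : Ob T) (S : FV T V) : LFc F' V S -> Gen V S
| gI (V : Ob T) (S S' : FV T V) : Gen V S -> fv_iso T S S' -> Gen V S'
| gK (V : Ob T) (S : FV T V) (T_ : forall i, FV T (orb T S i)) :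
    Gen V S -> (forall i, Gen (orb T S i) (T_ i)) -> Gen V (coprodV T T_).

Hypothesis HC : unital_wis C.
Hypothesis HF' : is_family F'.

Lemma Gen_Sub V (S : FV T V) : Gen V S -> forall X, SubO X S -> Gen V X.
Proof.
elim=> {V S}.
- move=> V S HS X HX; apply: gC; exact: (Sub_C HC HX HS).
- move=> V S HS X HX; apply: gL; exact: (Sub_LFc HX HS).
- move=> V S S' _ IH H X HX; apply: IH; exact: (Sub_iso HX (iso_sym H)).
- move=> V S T_ _ IHS _ IHT X HX.
  case: (Sub_coprod HX) => p0 [p Hiso].
  apply: (gI _ _ _ _ (iso_sym Hiso)); apply: gK.
  + apply: IHS; exact: Sub_restrict.
  + move=> i'; apply: IHT; exact: Sub_restrict.
Qed.

Lemma Gen_res V (S : FV T V) : Gen V S ->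
  forall U (f : Hom U V) (P : FObj T) (q : FHom P (rep T U)) (r : FHom P (fvobj T V S)),
    is_pullback (fvmap T V S) (repmap T f) r q -> Gen U {| fvobj := P; fvmap := q |}.
Proof.
elim=> {V S}.
- move=> V S HS U f P q r Hpb; apply: gC.
  case: HC => [[[_ Hres] _ _] _ _]; exact: (Hres _ _ _ _ _ _ _ Hpb HS).
- move=> V S HS U f P q r Hpb; apply: gL.
  case: (LFc_unital HF') => [[[_ Hres] _ _] _ _]; exact: (Hres _ _ _ _ _ _ _ Hpb HS).
- move=> V S S' _ IH H U f P q r Hpb.
  case: (iso_sym H) => phi [psi [H1 H2 H3]].
  exact: (IH _ _ _ _ _ (pb_along_iso _ _ H1 H2 H3 Hpb)).
- move=> V S T_ _ IHS _ IHT U f P q r Hpb.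
  case: (HorbT _ _ _ (fvmap T V S) (repmap T f)) => Q [r' [q' Hq]].
  pose pbc := fun b : fidx T Q =>
    pb_choice (fvmap T _ (T_ (projT1 (r' b)))) (repmap T (projT2 (r' b))).
  pose Pb := fun b => projT1 (pbc b).
  pose rb := fun b => projT1 (projT2 (pbc b)).
  pose qb := fun b => proj1_sig (projT2 (projT2 (pbc b))).
  have Hb : forall b, is_pullback (fvmap T _ (T_ (projT1 (r' b)))) (repmap T (projT2 (r' b))) (rb b) (qb b).
    move=> b; exact: (proj2_sig (projT2 (projT2 (pbc b)))).
  have HP2 := @pb_coprod T V U S T_ f Q r' q' Hq Pb rb qb Hb.
  have Hiso := pb_unique_iso _ Hpb HP2.
  apply: (gI _ _ _ _ (iso_sym Hiso)).
  apply: gK.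
  + exact: (IHS _ _ _ _ _ Hq).
  + move=> b; exact: (IHT _ _ _ _ _ _ (Hb b)).
Qed.

Lemma Gen_unital : unital_wis Gen.
Proof.
split; first split; first split.
- move=> V S S' H HS; exact: (gI _ _ _ HS H).
- move=> U V f S P q r Hpb HS; exact: (Gen_res _ _ HS _ _ _ _ _ Hpb).
- move=> V _; apply: gC; exact: (proj1 (unital_star_empty V HC)).
- move=> V S T_ HS HT; exact: gK.
- move=> V; exists (starV T V); apply: gC; exact: (proj1 (unital_star_empty V HC)).
- move=> V S S' H; split; apply: (Gen_Sub _ _ H); [exact: Sub_inl | exact: Sub_inr].
Qed.

Lemma Gen_join V (S : FV T V) : wis_join C (EFinf F') V S <-> Gen V S.
Proof.
split.
- move=> H; apply: H.
  + by case: Gen_unital.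
  + move=> W X HX; exact: gC.
  + move=> W X HX; apply: gL; apply/union_LFc; by right.
- elim=> {V S}.
  + move=> V S HS W HW HCW _; exact: HCW.
  + move=> V S HS W HW HCW HEW.
    case/union_LFc: HS => [[HS|HS]|HS]; last exact: HEW.
    * case: HW => [[Hiso _] _ _]; apply: (Hiso _ _ _ (iso_sym HS)); apply: HCW.
      exact: (proj2 (unital_star_empty V HC)).
    * case: HW => [[Hiso _] _ _]; apply: (Hiso _ _ _ (iso_sym HS)); apply: HCW.
      exact: (proj1 (unital_star_empty V HC)).
  + move=> V S S' _ IH H W HW HCW HEW.
    case: (HW) => [[Hiso _] _ _]; exact: (Hiso _ _ _ H (IH W HW HCW HEW)).
  + move=> V S T_ _ IHS _ IHT W HW HCW HEW.
    case: (HW) => [_ _ Hcop]; apply: Hcop => //; first exact: IHS.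
    move=> i; exact: IHT.
Qed.

End JJ.

Unset Implicit Arguments.

Lemma part4 (T : Cat) (HorbT : orbital T) (HatT : atomic T) :
  (forall F F' (C : Cls T), is_family F -> is_family F' -> fam_le F F' ->
     unital_wis C -> (forall V, nabla_u C V <-> F V) ->
     let t := wis_join C (EFinf F') in
     [/\ unital_wis t,
         (forall V, nabla_u t V <-> F' V)
       & forall D : Cls T, unital_wis D -> fam_le F' (nabla_u D) ->
           (cls_le C D <-> cls_le t D)]).
Proof.
move=> F F' C HF HF' HFF' HC HnC t.
have Et : t = Gen T C F'.
  apply: cls_eq => V S; exact: (Gen_join T HorbT C F' HC HF' V S).
have Ht : unital_wis t by rewrite Et; exact: Gen_unital.
have Hwt : weak_indexing_system t by case: Ht.
have CleT : cls_le C t by move=> V S HS W _ HCW _; exact: HCW.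
have EleT : cls_le (EFinf F') t by move=> V S HS W _ _ HEW; exact: HEW.
split => //.
- move=> V; split.
  + move=> H2.
    have HR : cls_le t (RF F').
      move=> W S HS; apply: HS.
      * by case: (RF_unital HF').
      * apply: (C_le_RF HorbT HatT HC) => U HU; apply: HFF'; exact/HnC.
      * move=> U X HX; apply: (LFc_le_RF HF'); apply/union_LFc; by right.
    exact: (RF_nabla (HR _ _ H2)).
  + move=> HV; apply: EleT; split => //; exists 2; exact: iso_refl.
- move=> D HD HFD; split.
  + move=> HCD V S HS; apply: HS => //; first by case: HD.
    move=> U X HX; apply: (proj2 (L_adj F' HD) HFD); by right.
  + move=> HtD V S HS; apply: HtD; exact: CleT.
Qed.

Theorem mainTheorem18 (T : Cat) (HorbT : orbital T) (HatT : atomic T) :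
  (* nabla_u restricts to a map wIndSys^uni -> Fam *)
  (forall C : Cls T, unital_wis C -> is_family (nabla_u C)) /\
  (* left adjoint L(F) = F^0 u E_F F^infty_F *)
  ((forall F, is_family F -> unital_wis (cls_union (@F0 T) (EFinf F))) /\
   (forall F (C : Cls T), is_family F -> unital_wis C ->
      (cls_le (cls_union (@F0 T) (EFinf F)) C <-> fam_le F (nabla_u C))) /\
   (forall F F', is_family F -> is_family F' ->
      cls_le (cls_union (@F0 T) (EFinf F)) (cls_union (@F0 T) (EFinf F')) ->
      fam_le F F')) /\
  (* fully faithful right adjoint *)
  (exists R : (Ob T -> Prop) -> Cls T,
     (forall F, is_family F -> unital_wis (R F)) /\
     (forall (C : Cls T) F, unital_wis C -> is_family F ->
        (fam_le (nabla_u C) F <-> cls_le C (R F))) /\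
     (forall F F', is_family F -> is_family F' -> cls_le (R F) (R F') -> fam_le F F')) /\
  (* cocartesian fibration with transport C |-> C v E_F' F^infty_F' *)
  (forall F F' (C : Cls T), is_family F -> is_family F' -> fam_le F F' ->
     unital_wis C -> (forall V, nabla_u C V <-> F V) ->
     let t := wis_join C (EFinf F') in
     [/\ unital_wis t,
         (forall V, nabla_u t V <-> F' V)
       & forall D : Cls T, unital_wis D -> fam_le F' (nabla_u D) ->
           (cls_le C D <-> cls_le t D)]).
Proof.
split; first by move=> C HC; exact: (nabla_family HorbT HC).
split.
  split; first by move=> F HF; exact: L_unital.
  split; first by move=> F C HF HC; exact: L_adj.
  move=> F F' _ _; exact: L_ff.
split; last exact: part4.
exists RF; split; first by move=> F HF; exact: RF_unital.
split; first by move=> C F HC HF; exact: (RF_adj HorbT HatT F HC).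
move=> F F' HF _; exact: RF_ff.
Qed.
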